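(* Let $\lambda>0$ be fixed and let $n_1>n_2\ge j-1\ge 1$ be integers with $n_2\ge \lceil \lambda^{-1}\rceil$. Then the regular-graph exponents $\lambda_{n_1,j}(\lambda)$ and $\lambda_{n_2,j}(\lambda)$ (in dimensions $n_1$ and $n_2$, with the same parameter $\lambda$) are well-defined and satisfy $$\lambda_{n_1,j}(\lambda)<\lambda_{n_2,j}(\lambda).$$
   Context: For an integer $n\ge1$ let $f_n(x)=(1+x)^{n+1}/x$ for $x>0$. The function $f_n$ is strictly decreasing on $(0,1/n]$ and strictly increasing on $[1/n,\infty)$. Regular graph exponents (Schmidt–Summerer), defined algebraically. For $\lambda\in[1/n,\infty)$ let $\mu=\mu_n(\lambda)\in(0,1/n]$ be the unique solution of $f_n(\mu)=f_n(\lambda)$, and set $$\lambda_{n,j}(\lambda)=\lambda^{1-\frac{j-1}{n+1}}\,\mu^{\frac{j-1}{n+1}},\qquad 1\le j\le n+2 .$$ Thus $\lambda_{n,1}(\lambda)=\lambda$, $\lambda_{n,n+2}(\lambda)=\mu$, and all ratios $\lambda_{n,j}/\lambda_{n,j+1}$ are equal. For $\lambda=\infty$ put $\lambda_{n,1}=\infty$, $\lambda_{n,2}=1$ and $\lambda_{n,j}=0$ for $3\le j\le n+2$. Further put $\widehat\lambda_{n,j}(\lambda):=\lambda_{n,j+1}(\lambda)$ for $1\le j\le n+1$, and $\widehat\lambda_n(\lambda):=\widehat\lambda_{n,1}(\lambda)=\lambda_{n,2}(\lambda)$. These numbers are the simultaneous-approximation exponents $\lambda_{n,j},\widehat\lambda_{n,j}$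 of any vector inducing the regular graph in dimension $n$ with $\lambda_n=\lambda$. They are well-defined exactly when $\lambda\ge 1/n$. *)

(* Defs.v *)
From Stdlib Require Import Reals Lra Lia ClassicalEpsilon.
Open Scope R_scope.

Definition fn (n : nat) (x : R) : R := (1 + x) ^ (n + 1) / x.

Definition is_mu (n : nat) (lam m : R) : Prop :=
  0 < m <= / INR n /\ fn n m = fn n lam.

(* mu_n(lam): the (unique, when lam >= 1/n) solution, chosen by Hilbert's epsilon *)
Definition mu (n : nat) (lam : R) : R :=
  epsilon (inhabits 0) (is_mu n lam).

Definition lam_nj (n j : nat) (lam : R) : R :=
  Rpower lam (1 - INR (j - 1) / INR (n + 1)) *
  Rpower (mu n lam) (INR (j - 1) / INR (n + 1)).

(* Main.v *)
Require Import Defs.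
From Stdlib Require Import Reals.
From Stdlib Require Import Lra Lia ClassicalEpsilon Ranalysis5.
From Coquelicot Require Import Coquelicot.
Open Scope R_scope.

Definition hh (n : nat) (x : R) : R := INR (n+1) * ln (1+x) - ln x.

Lemma hh_der n c : 0 < c ->
  derivable_pt_lim (hh n) c (INR (n+1) / (1+c) - / c).
Proof.
  intro Hc. apply is_derive_Reals. unfold hh. auto_derive. lra. field. lra.
Qed.

Lemma hh_cont n c (k : R) : 0 < c -> continuity_pt (fun x => k - hh n x) c.
Proof.
  intro Hc. apply derivable_continuous_pt.
  exists (- (INR (n+1) / (1+c) - / c)).
  apply is_derive_Reals. unfold hh. auto_derive. lra. field. lra.
Qed.

Lemma hh_mvt n a b : 0 < a < b -> exists c, a < c < b /\
  hh n b - hh n a = (INR n * c - 1) * / (c * (1 + c)) * (b - a).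
Proof.
  intros [Ha Hab].
  destruct (MVT_cor2 (hh n) (fun c => INR (n+1) / (1+c) - / c) a b Hab)
    as [c [Hc1 Hc2]].
  { intros c Hc. apply hh_der. lra. }
  exists c. split; [exact Hc2|]. rewrite Hc1. rewrite plus_INR. simpl.
  field. lra.
Qed.

Lemma inv_pos_helper c : 0 < c -> 0 < / (c * (1 + c)).
Proof. intro. apply Rinv_0_lt_compat. nra. Qed.

Lemma hh_dec n a b : (1 <= n)%nat -> 0 < a < b -> b <= / INR n -> hh n b < hh n a.
Proof.
  intros Hn Hab Hb. destruct (hh_mvt n a b Hab) as [c [Hc E]].
  assert (Hn' : 1 <= INR n) by (apply (le_INR 1); lia).
  assert (Hi : INR n * / INR n = 1) by (field; lra).
  assert (Hnc : INR n * c < 1).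
  { assert (c < / INR n) by lra. nra. }
  assert (P := inv_pos_helper c ltac:(lra)).
  assert ((INR n * c - 1) * / (c * (1 + c)) < 0) by nra.
  nra.
Qed.

Lemma hh_inc n a b : (1 <= n)%nat -> / INR n <= a -> a < b -> hh n a < hh n b.
Proof.
  intros Hn Ha Hab.
  assert (Hn' : 1 <= INR n) by (apply (le_INR 1); lia).
  assert (Hi : INR n * / INR n = 1) by (field; lra).
  assert (0 < / INR n) by (apply Rinv_0_lt_compat; lra).
  destruct (hh_mvt n a b ltac:(lra)) as [c [Hc E]].
  assert (Hnc : 1 < INR n * c) by nra.
  assert (P := inv_pos_helper c ltac:(lra)).
  assert (0 < (INR n * c - 1) * / (c * (1 + c))) by nra.
  nra.
Qed.

Lemma fn_pos n x : 0 < x -> 0 < fn n x.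
Proof.
  intro. unfold fn. apply Rdiv_lt_0_compat; [apply pow_lt; lra | lra].
Qed.

Lemma ln_fn n x : 0 < x -> ln (fn n x) = hh n x.
Proof.
  intro. unfold fn, hh. rewrite ln_div; [| apply pow_lt; lra | lra].
  rewrite ln_pow; lra.
Qed.

Lemma fn_eq n a b : 0 < a -> 0 < b -> (fn n a = fn n b <-> hh n a = hh n b).
Proof.
  intros Ha Hb. split; intro H.
  - rewrite <- (ln_fn n a Ha), <- (ln_fn n b Hb), H. reflexivity.
  - apply ln_inv; try apply fn_pos; auto. rewrite !ln_fn; auto.
Qed.

Lemma mu_unique n lam (Hn : (1 <= n)%nat) m1 m2 :
  is_mu n lam m1 -> is_mu n lam m2 -> m1 = m2.
Proof.
  intros [B1 E1] [B2 E2].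
  assert (hh n m1 = hh n m2).
  { apply fn_eq; try lra. }
  destruct (Rtotal_order m1 m2) as [L|[L|L]]; auto.
  - pose proof (hh_dec n m1 m2 Hn ltac:(lra) ltac:(lra)). lra.
  - pose proof (hh_dec n m2 m1 Hn ltac:(lra) ltac:(lra)). lra.
Qed.

Lemma mu_exists n lam (Hn : (1 <= n)%nat) : / INR n <= lam -> exists m, is_mu n lam m.
Proof.
  intro Hl.
  assert (Hn' : 1 <= INR n) by (apply (le_INR 1); lia).
  assert (Hi : INR n * / INR n = 1) by (field; lra).
  assert (Hp : 0 < / INR n) by (apply Rinv_0_lt_compat; lra).
  assert (Hlp : 0 < lam) by lra.
  set (c := hh n lam).
  assert (Hc : hh n (/ INR n) <= c).
  { destruct (Req_dec (/ INR n) lam) as [E|E].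
    - rewrite E. unfold c; lra.
    - left. apply hh_inc; auto; lra. }
  destruct Hc as [Hc|Hc].
  2:{ exists (/ INR n). split; [lra|]. apply fn_eq; try lra; exact Hc. }
  set (x0 := exp (- Rabs c - 1) * / INR n).
  assert (He : 0 < exp (- Rabs c - 1) < 1).
  { split. apply exp_pos. apply (Rlt_le_trans _ (exp 0)); [apply exp_increasing|rewrite exp_0; lra].
    pose proof (Rabs_pos c). lra. }
  assert (Hx0 : 0 < x0 < / INR n) by (unfold x0; nra).
  assert (Hh0 : c < hh n x0).
  { unfold hh, x0. rewrite ln_mult; [|apply exp_pos|lra]. rewrite ln_exp.
    assert (ln (/ INR n) <= 0).
    { rewrite <- ln_1. apply ln_le; nra. }
    assert (0 < ln (1 + x0)).
    { rewrite <- ln_1. apply ln_increasing; unfold x0 in *; lra. }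
    assert (0 < INR (n+1)) by (apply lt_0_INR; lia).
    pose proof (Rle_abs c). fold x0. nra. }
  destruct (IVT_interv (fun x => c - hh n x) x0 (/ INR n)) as [z [Hz Ez]].
  - intros a Ha. apply hh_cont. lra.
  - lra.
  - lra.
  - lra.
  - exists z. split; [lra|]. apply fn_eq; try lra; unfold c in Ez; lra.
Qed.

Lemma mu_spec n lam (Hn : (1 <= n)%nat) : / INR n <= lam -> is_mu n lam (mu n lam).
Proof.
  intro H. unfold mu. apply epsilon_spec. apply mu_exists; auto.
Qed.

Lemma lam_nj_eq n j lam (Hn : (1 <= n)%nat) : 0 < lam -> / INR n <= lam ->
  lam_nj n j lam = exp (ln lam + INR (j-1) * (ln (1 + mu n lam) - ln (1 + lam))).
Proof.
  intros Hl H. destruct (mu_spec n lam Hn H) as [B E].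
  apply fn_eq in E; [|lra|lra]. unfold hh in E.
  unfold lam_nj, Rpower. rewrite <- exp_plus. f_equal.
  assert (0 < INR (n+1)) by (apply lt_0_INR; lia).
  assert (ln (mu n lam) = ln lam + INR (n+1) * (ln (1 + mu n lam) - ln (1 + lam))) by lra.
  rewrite H1. field. lra.
Qed.

Theorem proposition2p1 (lam : R) (n1 n2 j : nat)
  (Hlam : 0 < lam) (H12 : (n2 < n1)%nat) (Hj : (1 <= j - 1 <= n2)%nat)
  (Hceil : / lam <= INR n2) :
  ((/ INR n1 <= lam /\ / INR n2 <= lam) /\
   (exists! m, is_mu n1 lam m) /\ (exists! m, is_mu n2 lam m)) /\
  lam_nj n1 j lam < lam_nj n2 j lam.
Proof.
  assert (Hn2 : (1 <= n2)%nat) by lia.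
  assert (Hn1 : (1 <= n1)%nat) by lia.
  assert (R1 : 1 <= INR n2) by (apply (le_INR 1); lia).
  assert (R12 : INR n2 < INR n1) by (apply lt_INR; lia).
  assert (I1 : INR n1 * / INR n1 = 1) by (field; lra).
  assert (I2 : INR n2 * / INR n2 = 1) by (field; lra).
  assert (Il : lam * / lam = 1) by (field; lra).
  assert (P1 : 0 < / INR n1) by (apply Rinv_0_lt_compat; lra).
  assert (P2 : 0 < / INR n2) by (apply Rinv_0_lt_compat; lra).
  assert (P3 : 0 < / lam) by (apply Rinv_0_lt_compat; lra).
  assert (L2 : / INR n2 <= lam).
  { apply Rmult_le_reg_l with (INR n2); [lra|]. nra. }
  assert (L12 : / INR n1 < / INR n2).
  { apply Rinv_lt_contravar; nra. }
  assert (L1 : / INR n1 <= lam) by lra.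
  split.
  { split; [split; auto|]. split.
    - destruct (mu_exists n1 lam Hn1 L1) as [m Hm]. exists m. split; auto.
      intros; apply (mu_unique n1 lam); auto.
    - destruct (mu_exists n2 lam Hn2 L2) as [m Hm]. exists m. split; auto.
      intros; apply (mu_unique n2 lam); auto. }
  rewrite !lam_nj_eq; auto. apply exp_increasing.
  destruct (mu_spec n1 lam Hn1 L1) as [B1 E1].
  destruct (mu_spec n2 lam Hn2 L2) as [B2 E2].
  set (m1 := mu n1 lam) in *. set (m2 := mu n2 lam) in *.
  assert (Hlt : m1 < m2).
  { destruct (Rlt_le_dec (/ INR n1) m2) as [C|C]; [lra|].
    apply fn_eq in E1; [|lra|lra]. apply fn_eq in E2; [|lra|lra].
    assert (Hm2 : m2 < lam).
    { destruct B2. lra. }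
    assert (ln (1 + m2) < ln (1 + lam)) by (apply ln_increasing; lra).
    assert (Hh : hh n1 m2 < hh n1 m1).
    { unfold hh in *. rewrite !plus_INR in *. simpl in *.
      assert (INR n2 < INR n1) by exact R12. nra. }
    destruct (Rlt_le_dec m1 m2) as [D|D]; auto.
    destruct D as [D|D].
    - pose proof (hh_dec n1 m2 m1 Hn1 ltac:(lra) ltac:(lra)). lra.
    - rewrite D in Hh. lra. }
  assert (ln (1 + m1) < ln (1 + m2)) by (apply ln_increasing; lra).
  assert (1 <= INR (j-1)) by (apply (le_INR 1); lia).
  nra.
Qed.
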